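(* Let $\mathbb{F}$ be a field with a non-identity involution $x\mapsto x^\star$, $\mathbb{K}=\{x\in\mathbb{F}:x^\star=x\}$, $V$ an $n$-dimensional $\mathbb{F}$-vector space, and $b$ a non-degenerate Hermitian form on $V$ with Witt index $\nu$. Let $\mathcal{F}$ be a maximal partially complete $b$-singular flag of $V$. Then $\mathrm{WH}_{b,\mathcal{F}}$ is a $\mathbb{K}$-linear subspace of $\mathrm{End}_{\mathbb{F}}(V)$ with $\dim_{\mathbb{K}}\mathrm{WH}_{b,\mathcal{F}}=\nu(2n-2\nu-1)$.
   Context: A sesquilinear form $b$ on $V$ is linear in the second argument and satisfies $b(\alpha x+x',y)=\alpha^\star b(x,y)+b(x',y)$; it is Hermitian if $b(y,x)=b(x,y)^\star$; non-degenerate if $b(x,y)=0$ for all $x$ forces $y=0$. An $\mathbb{F}$-subspace $X$ is totally $b$-singular if $b(x,y)=0$ for all $x,y\in X$; the Witt index is the maximal $\mathbb{F}$-dimension of such a subspace. An $\mathbb{F}$-linear endomorphism $u$ is $b$-Hermitian if $b(u(x),y)=b(x,u(y))$ for all $x,y$; $\mathcal{H}_b$ is the set of these. A flag $(F_0,\dots,F_p)$ of $\mathbb{F}$-subspaces is partially complete if $\dim_{\mathbb{F}}F_i=i$, $b$-singular if $F_p$ is totally $b$-singular, maximal if $p=\nu$. $\mathrm{WH}_{b,\mathcal{F}}$ is the set of nilpotent $u\in\mathcal{H}_b$ with $u(F_i)\subseteq F_i$ for all $i$. *)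

(* Defs.v *)
(* V = 'rV[F]_n (row vectors); End_F(V) = 'M[F]_n acting on
   the right: u(x) := x *m u.  F-subspaces of V are row spaces of matrices. *)
From HB Require Import structures.
From mathcomp Require Import all_boot all_order all_algebra.
Set Implicit Arguments. Unset Strict Implicit. Unset Printing Implicit Defensive.
Import GRing.Theory.
Local Open Scope ring_scope.

Section Defs.
Variables (F : fieldType) (conj : F -> F) (n : nat).
Variable b : 'rV[F]_n -> 'rV[F]_n -> F.

Definition sesq_form : Prop :=
  (forall (a : F) x x' y, b (a *: x + x') y = conj a * b x y + b x' y) /\
  (forall (a : F) x y y', b x (a *: y + y') = a * b x y + b x y').

Definition herm_form : Prop := forall x y, b y x = conj (b x y).

Definition sesq_nondegenerate : Prop :=
  forall y, (forall x, b x y = 0) -> y = 0.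

Definition totally_singular m (X : 'M[F]_(m, n)) : Prop :=
  forall x y : 'rV[F]_n, (x <= X)%MS -> (y <= X)%MS -> b x y = 0.

Definition witt_index (nu : nat) : Prop :=
  (exists X : 'M[F]_n, totally_singular X /\ \rank X = nu) /\
  (forall X : 'M[F]_n, totally_singular X -> (\rank X <= nu)%N).

(* flag (F_0, ..., F_p), given as a nat-indexed family (only i <= p matter) *)
Definition is_flag (p : nat) (Fl : nat -> 'M[F]_n) : Prop :=
  forall i, (i < p)%N -> (Fl i <= Fl i.+1)%MS.

Definition partially_complete (p : nat) (Fl : nat -> 'M[F]_n) : Prop :=
  forall i, (i <= p)%N -> \rank (Fl i) = i.

Definition singular_flag (p : nat) (Fl : nat -> 'M[F]_n) : Prop :=
  totally_singular (Fl p).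

Definition maximal_pc_singular_flag (nu p : nat) (Fl : nat -> 'M[F]_n) : Prop :=
  [/\ is_flag p Fl, partially_complete p Fl, singular_flag p Fl & p = nu].

Definition b_hermitian (u : 'M[F]_n) : Prop :=
  forall x y, b (x *m u) y = b x (y *m u).

Definition mx_nilpotent (u : 'M[F]_n) : Prop := exists k : nat, u ^+ k = 0.

Definition WH (p : nat) (Fl : nat -> 'M[F]_n) (u : 'M[F]_n) : Prop :=
  [/\ mx_nilpotent u, b_hermitian u &
      forall i, (i <= p)%N -> (Fl i *m u <= Fl i)%MS].

Definition inK (k : F) : Prop := conj k = k.

Definition K_subspace (S : 'M[F]_n -> Prop) : Prop :=
  [/\ S 0, (forall u v, S u -> S v -> S (u + v)) &
      (forall k u, inK k -> S u -> S (k *: u))].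

Definition K_dim (S : 'M[F]_n -> Prop) (d : nat) : Prop :=
  exists B : 'I_d -> 'M[F]_n,
    [/\ forall i, S (B i),
        (forall c : 'I_d -> F, (forall i, inK (c i)) ->
           \sum_(i < d) c i *: B i = 0 -> forall i, c i = 0) &
        (forall u, S u -> exists c : 'I_d -> F,
           (forall i, inK (c i)) /\ u = \sum_(i < d) c i *: B i)].
End Defs.

(* Main.v *)
Set Warnings "-notation-overridden,-ambiguous-paths".
Require Import Defs.
From HB Require Import structures.
From mathcomp Require Import all_boot all_order all_algebra.
From mathcomp Require Import zify.
Set Implicit Arguments. Unset Strict Implicit. Unset Printing Implicit Defensive.
Import GRing.Theory.

Definition levf (nu n r : nat) : nat :=
  if (r < nu)%N then r else if (r < n - nu)%N then nu else r.

Definition gf (nu n j : nat) : nat := if (j <= nu)%N then j else (n - ((nu + nu).+1 - j))%N.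

Lemma arith1 nu n r c : (nu + nu <= n)%N -> (r < n)%N -> (levf nu n r <= c)%N ->
  exists j, [/\ (0 < j <= (nu + nu).+1)%N, (r < gf nu n j)%N & (gf nu n j.-1 <= c)%N].
Proof.
rewrite /levf /gf => h rn; case: ifP => r1.
  move=> rc; exists r.+1; split => /=; try case: ifP => ?; try case: ifP => ?; lia.
case: ifP => r2 lc.
  exists nu.+1; split => /=; try case: ifP => ?; try case: ifP => ?; lia.
exists (r + nu + nu + 2 - n)%N; split => /=; try case: ifP => ?; try case: ifP => ?; lia.
Qed.

Lemma arith2 nu n r c j : (nu + nu <= n)%N -> (0 < j <= (nu + nu).+1)%N ->
  (r < gf nu n j)%N -> (gf nu n j.-1 <= c)%N -> (levf nu n r <= c)%N.
Proof.
rewrite /levf /gf => h hj; case: ifP => j1; case: ifP => j2; case: ifP => r1; try case: ifP => r2; lia.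
Qed.

Lemma cnt k m : (\sum_(c < m) (c < k : nat))%N = minn k m.
Proof.
elim: m => [|m IH]; first by rewrite big_ord0 minn0.
rewrite big_ord_recr /= IH; case: (ltnP m k) => hm /=; lia.
Qed.


Section SumLev.
Variables nu n : nat.
Hypothesis h : (nu + nu <= n)%N.
Let T k := (\sum_(r < k) levf nu n r)%N.
Lemma Tstep k : T k.+1 = (T k + levf nu n k)%N.
Proof. by rewrite /T big_ord_recr. Qed.

Lemma phase1 k : (k <= nu)%N -> (2 * T k + k = k * k)%N.
Proof.
elim: k => [|k IH] kn; first by rewrite /T big_ord0.
have e : levf nu n k = k by rewrite /levf ifT //; lia.
rewrite Tstep e; have := IH (ltnW kn); clear IH e; nia.
Qed.

Lemma phase2 i : (nu + i <= n - nu)%N -> (2 * T (nu + i) + nu + nu * nu = 2 * nu * (nu + i))%N.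
Proof.
elim: i => [|i IH] hi.
  by rewrite addn0; have := phase1 (leqnn nu); nia.
have e : levf nu n (nu + i) = nu by rewrite /levf ifF ?ifT //; lia.
have hi' : (nu + i <= n - nu)%N by lia.
rewrite addnS Tstep e; have := IH hi'; clear IH e; nia.
Qed.

Lemma phase3 i : (n - nu + i <= n)%N ->
  (2 * T (n - nu + i) + nu + nu * nu + (n - nu) * (n - nu) + (n - nu + i)
   = 2 * nu * (n - nu) + (n - nu + i) * (n - nu + i) + (n - nu))%N.
Proof.
elim: i => [|i IH] hi.
  rewrite addn0; have := phase2 (i := n - nu - nu); rewrite subnKC; last lia.
  move=> /(_ (leqnn _)); nia.
have e : levf nu n (n - nu + i) = (n - nu + i)%N by rewrite /levf ifF ?ifF //; lia.
have hi' : (n - nu + i <= n)%N by lia.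
rewrite addnS Tstep e; have := IH hi'; clear IH e.
set a := (n - nu)%N; nia.
Qed.

Lemma sum_lev : T n = (nu * (2 * n - 2 * nu - 1))%N.
Proof.
have := phase3 (i := nu); rewrite subnK; last lia.
move=> /(_ (leqnn _)); set a := (n - nu)%N.
have ea : n = (a + nu)%N by rewrite /a subnK //; lia.
rewrite ea; nia.
Qed.
End SumLev.

Local Open Scope ring_scope.



Section Descent.
Variables (F : fieldType) (conj : {rmorphism F -> F}).
Hypothesis conj_invol : involutive conj.
Variable theta : F.
Hypothesis theta_nf : conj theta != theta.
Variable n : nat.
Variable sig : 'M[F]_n -> 'M[F]_n.
Hypothesis sigD : forall u v, sig (u + v) = sig u + sig v.
Hypothesis sigZ : forall (a : F) u, sig (a *: u) = conj a *: sig u.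
Hypothesis sigK : forall u, sig (sig u) = u.
Variable d : nat.
Variable B : 'I_d -> 'M[F]_n.
Variable S : 'M[F]_n -> Prop.
Hypothesis S_span : forall u, S u <-> exists c : 'I_d -> F, u = \sum_i c i *: B i.
Hypothesis B_free : forall c : 'I_d -> F, \sum_i c i *: B i = 0 -> forall i, c i = 0.
Hypothesis S_sig : forall u, S u -> S (sig u).

Lemma sig0 : sig 0 = 0.
Proof. by have := sigD 0 0; rewrite addr0 => /(canLR (addrK _)); rewrite subrr. Qed.

Lemma sig_sum m (c : 'I_m -> F) (x : 'I_m -> 'M[F]_n) :
  sig (\sum_i c i *: x i) = \sum_i conj (c i) *: sig (x i).
Proof.
elim/big_rec2: _ => [|i y1 y2 _ <-]; first exact: sig0.
by rewrite sigD sigZ.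
Qed.

Lemma S0 : S 0.
Proof. by apply/S_span; exists (fun=> 0); rewrite big1 // => i _; rewrite scale0r. Qed.

Lemma SD u v : S u -> S v -> S (u + v).
Proof.
move=> /S_span[c ->] /S_span[c' ->]; apply/S_span; exists (fun i => c i + c' i).
by rewrite -big_split; apply: eq_bigr => i _; rewrite scalerDl.
Qed.

Lemma SZ a u : S u -> S (a *: u).
Proof.
move=> /S_span[c ->]; apply/S_span; exists (fun i => a * c i).
by rewrite scaler_sumr; apply: eq_bigr => i _; rewrite scalerA.
Qed.

Definition Mb : 'M[F]_(d, n * n) := \matrix_i mxvec (B i).

Lemma mxvec_comb m (c : 'I_m -> F) (x : 'I_m -> 'M[F]_n) :
  mxvec (\sum_i c i *: x i) = \row_i c i *m \matrix_i mxvec (x i).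
Proof.
rewrite mulmx_sum_row linear_sum; apply: eq_bigr => i _.
by rewrite linearZ rowK mxE.
Qed.

Lemma S_sub u : S u -> (mxvec u <= Mb)%MS.
Proof. by move=> /S_span[c ->]; rewrite mxvec_comb submxMl. Qed.

Definition w (k : 'I_(d + d)) : 'M[F]_n :=
  match split k with
  | inl i => B i + sig (B i)
  | inr i => theta *: B i + sig (theta *: B i)
  end.

Lemma w_fix k : sig (w k) = w k.
Proof. by rewrite /w; case: split => i; rewrite sigD sigK addrC. Qed.

Lemma w_S k : S (w k).
Proof.
have SB i : S (B i).
  apply/S_span; exists (fun j => (i == j)%:R).
  rewrite (bigD1 i) //= eqxx scale1r big1 ?addr0 // => j; rewrite eq_sym => /negPf ->.
  by rewrite scale0r.
by rewrite /w; case: split => i; apply: SD; do ?apply: S_sig; do ?apply: SZ; apply: SB.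
Qed.

Definition Xw : 'M[F]_(d + d, n * n) := \matrix_k mxvec (w k).

Lemma Xw_eq : (Xw :=: Mb)%MS.
Proof.
apply/eqmxP/andP; split.
  by apply/row_subP => k; rewrite rowK; apply: S_sub; apply: w_S.
apply/row_subP => i; rewrite rowK.
have ne : conj theta - theta != 0 by rewrite subr_eq0.
have -> : B i = (conj theta - theta)^-1 *:
    (conj theta *: w (lshift d i) - w (rshift d i)).
  rewrite /w -[lshift d i]/(unsplit (inl i)) -[rshift d i]/(unsplit (inr i)) !unsplitK sigZ.
  have e : conj theta *: (B i + sig (B i)) - (theta *: B i + conj theta *: sig (B i))
     = (conj theta - theta) *: B i.
    by rewrite scalerDr opprD addrACA subrr addr0 scalerBl.
  by rewrite e scalerA mulVf // scale1r.
rewrite linearZ linearB linearZ /= scalemx_sub // addmx_sub //; first 1 last.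
  by rewrite eqmx_opp -(rowK (fun k => mxvec (w k))) row_sub.
by rewrite scalemx_sub // -(rowK (fun k => mxvec (w k))) row_sub.
Qed.


Lemma Mb_free : row_free Mb.
Proof.
apply: inj_row_free => v.
have -> : v = \row_i v 0 i by apply/rowP=> i; rewrite mxE.
rewrite -mxvec_comb => /eqP; rewrite mxvec_eq0 => /eqP /B_free H.
by apply/rowP => i; rewrite !mxE H.
Qed.

Lemma rank_Xw : \rank Xw = d.
Proof. by rewrite Xw_eq; apply/eqP; exact: Mb_free. Qed.

Lemma descent_dim : K_dim conj (fun u => S u /\ sig u = u) d.
Proof.
rewrite -rank_Xw.
pose f := maxrankfun Xw.
pose Y := rowsub f Xw.
have YE : Y = \matrix_k mxvec (w (f k)).
  by apply/row_matrixP => k; rewrite row_rowsub !rowK.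
have Yfree : row_free Y := maxrowsub_free Xw.
have Yeq : (Y :=: Xw)%MS := eq_maxrowsub Xw.
have indep : forall c : 'I_(\rank Xw) -> F,
    \sum_k c k *: w (f k) = 0 -> forall k, c k = 0.
  move=> c /(congr1 mxvec); rewrite mxvec_comb -YE linear0 => /eqP.
  rewrite mulmx_free_eq0 // => /eqP /rowP H k.
  by have := H k; rewrite !mxE.
exists (fun k => w (f k)); split.
- by move=> k; split; [exact: w_S | exact: w_fix].
- by move=> c _; exact: indep.
move=> u [Su fu].
have : (mxvec u <= Y)%MS by rewrite Yeq Xw_eq; exact: S_sub.
case/submxP => v uv.
have ue : u = \sum_k v 0 k *: w (f k).
  apply: (can_inj mxvecK); rewrite mxvec_comb -YE uv; congr (_ *m _).
  by apply/rowP => k; rewrite mxE.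
exists (fun k => v 0 k); split => //.
move=> k; apply/eqP; rewrite -subr_eq0; apply/eqP; move: k; apply: indep.
have := congr1 sig ue; rewrite fu sig_sum.
under eq_bigr do rewrite w_fix.
move=> ue'.
rewrite (eq_bigr (fun k => conj (v 0 k) *: w (f k) - v 0 k *: w (f k))).
  by rewrite sumrB -ue' -ue subrr.
by move=> k _; rewrite scalerBl.
Qed.
End Descent.



Section Chain.
Variables (F : fieldType) (n : nat).
Local Notation pidm k := (pid_mx k : 'M[F]_n).

Lemma pidmulE m k (X : 'M[F]_(n, m)) r c :
  (pidm k *m X) r c = if (r < k)%N then X r c else 0.
Proof.
rewrite mxE (bigD1 r) //= big1 ?addr0; last first.
  by move=> l; rewrite mxE eq_sym => /negPf; rewrite -val_eqE /= => ->; rewrite mul0r.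
by rewrite mxE eqxx /=; case: ifP; rewrite ?mul1r ?mul0r.
Qed.

Lemma pidrow m k (X : 'M[F]_(n, m)) r :
  row r (pidm k *m X) = if (r < k)%N then row r X else 0.
Proof. by apply/rowP => c; rewrite mxE pidmulE; case: ifP; rewrite !mxE. Qed.

Lemma rank_pidmul k (X : 'M[F]_n) : (k <= n)%N -> (\rank (pidm k *m X) <= k)%N.
Proof. by move=> kn; rewrite (leq_trans (mxrankM_maxl _ _)) // rank_pid_mx. Qed.

Lemma pid_le k j : (k <= j)%N -> pidm k *m pidm j = pidm k.
Proof.
move=> kj; apply/matrixP=> r c; rewrite pidmulE !mxE; case: ltnP => rk.
  by have -> : (r < j)%N = true by lia.
by rewrite andbF.
Qed.

Lemma extend_basis l : forall k (P B : 'M[F]_n),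
  (pidm k *m P <= B)%MS -> \rank (pidm k *m P) = k -> \rank B = (k + l)%N ->
  exists P' : 'M[F]_n, pidm k *m P' = pidm k *m P /\
     (pidm (k + l) *m P' == B)%MS.
Proof.
elim: l => [|l IH] k P B sAB rA rB.
  exists P; split => //; rewrite addn0.
  by have := mxrank_leqif_eq sAB; rewrite rA rB addn0 => H; rewrite -(eq_leqif H).
have kn : (k < n)%N.
  by have := rank_leq_col B; rewrite rB; lia.
have nBA : ~~ (B <= pidm k *m P)%MS.
  apply/negP => /mxrankS; rewrite rA rB; apply/negP; rewrite -ltnNge addnS ltnS leq_addr //.
case/row_subPn: nBA => i nvA.
pose v := row i B.
pose P1 : 'M[F]_n := \matrix_(r, c) if (r == k :> nat) then v 0 c else P r c.
have eqk : pidm k *m P1 = pidm k *m P.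
  apply/matrixP => r c; rewrite !pidmulE; case: ifP => // rk.
  by rewrite mxE; have -> : (r == k :> nat) = false by apply/negbTE; rewrite neq_ltn rk.
have rowP1 : forall r, row r (pidm k.+1 *m P1) =
    if (r < k)%N then row r (pidm k *m P) else if (r == k :> nat) then v else 0.
  move=> r; rewrite !pidrow; case: (ltnP r k) => rk.
    have -> : (r < k.+1)%N = true by lia.
    apply/rowP => c; rewrite !mxE.
    by have -> : (r == k :> nat) = false by lia.
  case: eqP => [rke|rkn].
    by rewrite rke ltnSn; apply/rowP => c; rewrite !mxE rke eqxx.
  by have -> : (r < k.+1)%N = false by lia.
have sA1 : (pidm k *m P <= pidm k.+1 *m P1)%MS.
  by rewrite -eqk -(pid_le (leqnSn k)) -mulmxA submxMl.
have sv1 : (v <= pidm k.+1 *m P1)%MS.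
  by have := row_sub (Ordinal kn) (pidm k.+1 *m P1); rewrite rowP1 /= ltnn eqxx.
have s1B : (pidm k.+1 *m P1 <= B)%MS.
  apply/row_subP => r; rewrite rowP1; case: ifP => _.
    by rewrite (submx_trans (row_sub _ _)).
  by case: ifP => _; rewrite ?sub0mx // row_sub.
have r1 : \rank (pidm k.+1 *m P1) = k.+1.
  apply/eqP; rewrite eqn_leq rank_pidmul //=.
  have : (pidm k *m P < pidm k.+1 *m P1)%MS.
    by rewrite ltmxE sA1 /=; apply: contra nvA => H; rewrite (submx_trans sv1 H).
  by rewrite ltmxErank rA => /andP[].
have rB1 : \rank B = (k.+1 + l)%N by rewrite rB addSnnS.
have [P' [e1 e2]] := IH k.+1 P1 B s1B r1 rB1.
exists P'; split; last by rewrite -addSnnS.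
by rewrite -eqk -(pid_le (leqnSn k)) -!mulmxA e1.
Qed.

Lemma chain_sub (G : nat -> 'M[F]_n) N :
  (forall j, (j < N)%N -> (G j <= G j.+1)%MS) ->
  forall j k, (j <= k)%N -> (k <= N)%N -> (G j <= G k)%MS.
Proof.
move=> HG j k jk kN; rewrite -(subnKC jk) in kN *.
elim: (k - j)%N kN => [|i IH] kN; first by rewrite addn0.
rewrite addnS (submx_trans (IH _)) ?HG //; lia.
Qed.

Lemma chain_basis (G : nat -> 'M[F]_n) N :
  (forall j, (j < N)%N -> (G j <= G j.+1)%MS) ->
  exists P : 'M[F]_n, forall j, (j <= N)%N -> (pidm (\rank (G j)) *m P == G j)%MS.
Proof.
elim: N => [|N IH] HG.
  have h1 : (pidm 0 *m 0 <= G 0)%MS by rewrite mulmx0 sub0mx.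
  have h2 : \rank (pidm 0 *m (0 : 'M[F]_n)) = 0%N by rewrite mulmx0 mxrank0.
  have [P' [_ e]] := @extend_basis (\rank (G 0)) 0 0 (G 0) h1 h2 erefl.
  by exists P' => j; rewrite leqn0 => /eqP ->.
have [P HP] := IH (fun j jN => HG j (leqW jN)).
have eN := HP N (leqnn N).
have sN : (pidm (\rank (G N)) *m P <= G N.+1)%MS.
  by rewrite (eqmxP eN) HG.
have rN : \rank (pidm (\rank (G N)) *m P) = \rank (G N) by rewrite (eqmxP eN).
have mono : (\rank (G N) <= \rank (G N.+1))%N by rewrite mxrankS // HG.
have rB : \rank (G N.+1) = (\rank (G N) + (\rank (G N.+1) - \rank (G N)))%N.
  by rewrite subnKC.
have [P' [e1 e2]] := @extend_basis (\rank (G N.+1) - \rank (G N)) _ P _ sN rN rB.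
exists P' => j; rewrite leq_eqVlt => /orP[/eqP ->|jN].
  by move: e2; rewrite subnKC.
have jN' : (j <= N)%N by [].
have rj : (\rank (G j) <= \rank (G N))%N.
  by rewrite mxrankS // (chain_sub (fun j jN => HG j (leqW jN))).
by rewrite -(pid_le rj) -mulmxA e1 mulmxA pid_le // HP.
Qed.

Lemma mulpidE m k (X : 'M[F]_(m, n)) r c :
  (X *m pidm k) r c = if (c < k)%N then X r c else 0.
Proof.
rewrite mxE (bigD1 c) //= big1 ?addr0; last first.
  by move=> l; rewrite mxE => /negPf; rewrite -val_eqE /= => ->; rewrite mulr0.
by rewrite mxE eqxx /=; case: ifP; rewrite ?mulr1 ?mulr0.
Qed.

Lemma pid_subP k m (M : 'M[F]_(m, n)) :
  (M <= pidm k)%MS <-> (forall (r : 'I_m) (c : 'I_n), (k <= c)%N -> M r c = 0).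
Proof.
split.
  case/submxP => D -> r c kc; rewrite mulpidE; case: ltnP => //; lia.
move=> H; have -> : M = M *m pidm k.
  apply/matrixP => r c; rewrite mulpidE; case: ltnP => // /H ->; done.
exact: submxMl.
Qed.

Lemma coordP (P u : 'M[F]_n) a b : P \in unitmx ->
  (pidm a *m P *m u <= pidm b *m P)%MS <->
  (forall r c : 'I_n, (r < a)%N -> (b <= c)%N -> (P *m u *m invmx P) r c = 0).
Proof.
move=> Pu.
have -> : pidm a *m P *m u = pidm a *m (P *m u *m invmx P) *m P.
  by rewrite -!mulmxA mulVmx // mulmx1.
rewrite submxMfree; last by rewrite row_free_unit.
rewrite pid_subP; split => H r c.
  by move=> ra bc; have := H r c bc; rewrite pidmulE ra.
by move=> bc; rewrite pidmulE; case: ifP => // ra; apply: H.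
Qed.

Definition Aset (allowed : 'I_n -> 'I_n -> bool) : pred ('I_n * 'I_n) :=
  [pred rc | allowed rc.1 rc.2].

Definition Bas (P : 'M[F]_n) allowed (k : 'I_#|Aset allowed|) : 'M[F]_n :=
  invmx P *m delta_mx (enum_val k).1 (enum_val k).2 *m P.
Arguments Bas P allowed k : clear implicits.

Lemma conj_comb (P : 'M[F]_n) m (c : 'I_m -> F) (Y : 'I_m -> 'M[F]_n) :
  P *m (\sum_k c k *: Y k) *m invmx P = \sum_k c k *: (P *m Y k *m invmx P).
Proof.
rewrite mulmx_sumr mulmx_suml; apply: eq_bigr => k _.
by rewrite -scalemxAr -scalemxAl.
Qed.

Lemma comb_delta allowed (c : 'I_#|Aset allowed| -> F) r0 c0 :
  (\sum_k c k *: delta_mx (enum_val k).1 (enum_val k).2) r0 c0 =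
  \sum_k if enum_val k == (r0, c0) then c k else 0.
Proof.
rewrite summxE; apply: eq_bigr => k _; rewrite !mxE.
case: (enum_val k) => r c1 /=; rewrite xpair_eqE (eq_sym r0) (eq_sym c0).
by case: (_ && _); rewrite ?mulr1 ?mulr0.
Qed.

Lemma Bas_span (P : 'M[F]_n) allowed (Pu : P \in unitmx) u :
  (forall r c, ~~ allowed r c -> (P *m u *m invmx P) r c = 0) <->
  exists c, u = \sum_k c k *: Bas P allowed k.
Proof.
have PB k : P *m Bas P allowed k *m invmx P = delta_mx (enum_val k).1 (enum_val k).2.
  by rewrite /Bas !mulmxA mulmxV // mul1mx -mulmxA mulmxV // mulmx1.
split => [H|[c ->] r0 c0 nal].
  set A := P *m u *m invmx P.
  have uE : u = invmx P *m A *m P.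
    by rewrite /A !mulmxA mulVmx // mul1mx -mulmxA mulVmx // mulmx1.
  exists (fun k => A (enum_val k).1 (enum_val k).2).
  rewrite {1}uE {1}(matrix_sum_delta A) pair_bigA /=.
  rewrite (bigID (fun p => p \in Aset allowed)) /= [X in _ + X]big1 ?addr0; last first.
    by case=> r c; rewrite inE /= => /H ->; rewrite scale0r.
  rewrite (big_enum_val (fun p => A p.1 p.2 *: delta_mx p.1 p.2)) /=.
  rewrite mulmx_sumr mulmx_suml; apply: eq_bigr => k _.
  by rewrite /Bas -scalemxAr -scalemxAl.
rewrite conj_comb; under eq_bigr do rewrite PB.
rewrite comb_delta big1 // => k _; case: eqP => // ek.
by move: (enum_valP k); rewrite ek unfold_in /= (negbTE nal).
Qed.

Lemma Bas_free (P : 'M[F]_n) allowed (Pu : P \in unitmx)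
  (c : 'I_#|Aset allowed| -> F) :
  \sum_k c k *: Bas P allowed k = 0 -> forall k, c k = 0.
Proof.
have PB k : P *m Bas P allowed k *m invmx P = delta_mx (enum_val k).1 (enum_val k).2.
  by rewrite /Bas !mulmxA mulmxV // mul1mx -mulmxA mulmxV // mulmx1.
move=> /(congr1 (fun X => P *m X *m invmx P)); rewrite conj_comb mulmx0 mul0mx.
under eq_bigr do rewrite PB.
move=> /matrixP H k; have := H (enum_val k).1 (enum_val k).2.
rewrite comb_delta (bigD1 k) //= -surjective_pairing eqxx big1 ?addr0 ?mxE //.
move=> j /negPf jk; case: eqP => // ej; move: jk.
by rewrite (enum_val_inj ej) eqxx.
Qed.
End Chain.



Section Form.
Variables (F : fieldType) (conj : {rmorphism F -> F}).
Hypothesis conj_invol : involutive conj.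
Variable n : nat.
Variable b : 'rV[F]_n -> 'rV[F]_n -> F.
Hypothesis b_sesq : sesq_form conj b.
Hypothesis b_herm : herm_form conj b.
Hypothesis b_nondeg : sesq_nondegenerate b.

Lemma bDl x x' y : b (x + x') y = b x y + b x' y.
Proof. by have := b_sesq.1 1 x x' y; rewrite scale1r rmorph1 mul1r. Qed.
Lemma b0l y : b 0 y = 0.
Proof. by have := bDl 0 0 y; rewrite addr0 => /(canLR (addrK _)); rewrite subrr. Qed.
Lemma bZl a x y : b (a *: x) y = conj a * b x y.
Proof. by have := b_sesq.1 a x 0 y; rewrite !addr0 b0l addr0. Qed.
Lemma bDr x y y' : b x (y + y') = b x y + b x y'.
Proof. by have := b_sesq.2 1 x y y'; rewrite scale1r mul1r. Qed.
Lemma b0r x : b x 0 = 0.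
Proof. by have := bDr x 0 0; rewrite addr0 => /(canLR (addrK _)); rewrite subrr. Qed.
Lemma bZr a x y : b x (a *: y) = a * b x y.
Proof. by have := b_sesq.2 a x y 0; rewrite !addr0 b0r addr0. Qed.
Lemma bNr x y : b x (- y) = - b x y.
Proof. by rewrite -scaleN1r bZr mulN1r. Qed.
Lemma bNl x y : b (- x) y = - b x y.
Proof. by rewrite -scaleN1r bZl rmorphN1 mulN1r. Qed.
Lemma bBr x y y' : b x (y - y') = b x y - b x y'.
Proof. by rewrite bDr bNr. Qed.
Lemma bsuml I (r : seq I) (P : pred I) (f : I -> 'rV[F]_n) y :
  b (\sum_(i <- r | P i) f i) y = \sum_(i <- r | P i) b (f i) y.
Proof. by elim/big_rec2: _ => [|i y1 y2 _ <-]; rewrite ?b0l ?bDl. Qed.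
Lemma bsumr I (r : seq I) (P : pred I) (f : I -> 'rV[F]_n) x :
  b x (\sum_(i <- r | P i) f i) = \sum_(i <- r | P i) b x (f i).
Proof. by elim/big_rec2: _ => [|i y1 y2 _ <-]; rewrite ?b0r ?bDr. Qed.

Definition Gm : 'M[F]_n := \matrix_(k, l) b (delta_mx 0 k) (delta_mx 0 l).

Lemma bM x y : b x y = (map_mx conj x *m Gm *m y^T) 0 0.
Proof.
rewrite {1}(row_sum_delta x) {1}(row_sum_delta y) bsuml.
rewrite mxE; under [RHS]eq_bigr do rewrite !mxE big_distrl /=.
rewrite exchange_big /=; apply: eq_bigr => k _.
rewrite bZl bsumr big_distrr /=; apply: eq_bigr => l _.
by rewrite bZr !mxE [y 0 l * _]mulrC mulrA.
Qed.

Lemma b_eq0 y : (forall x, b x y = 0) -> y = 0.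
Proof. exact: b_nondeg. Qed.

Lemma b_inj y y' : (forall x, b x y = b x y') -> y = y'.
Proof. by move=> H; apply/eqP; rewrite -subr_eq0; apply/eqP/b_eq0 => x; rewrite bBr H subrr. Qed.

Lemma mx_rinj (u v : 'M[F]_n) : (forall y : 'rV_n, y *m u = y *m v) -> u = v.
Proof. by move=> H; apply/row_matrixP => i; rewrite !rowE H. Qed.

Lemma Gm_unit : Gm \in unitmx.
Proof.
rewrite -unitmx_tr -row_free_unit; apply: inj_row_free => v vG.
apply: b_eq0 => x; have e : Gm *m v^T = (v *m Gm^T)^T by rewrite trmx_mul trmxK.
by rewrite bM -mulmxA e vG trmx0 mulmx0 mxE.
Qed.

Definition adj (u : 'M[F]_n) : 'M[F]_n := (invmx Gm *m map_mx conj u *m Gm)^T.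

Lemma adjP u x y : b (x *m u) y = b x (y *m adj u).
Proof.
rewrite !bM /adj trmx_mul trmxK !mulmxA mulmxK ?Gm_unit //.
by rewrite map_mxM.
Qed.

Lemma adjPl u x y : b (x *m adj u) y = b x (y *m u).
Proof. by rewrite [LHS]b_herm -adjP [b (y *m u) x]b_herm conj_invol. Qed.

Lemma adjK u : adj (adj u) = u.
Proof. by apply: mx_rinj => y; apply: b_inj => x; rewrite -adjP adjPl. Qed.

Lemma adjD u v : adj (u + v) = adj u + adj v.
Proof. by rewrite /adj map_mxD mulmxDr mulmxDl raddfD. Qed.

Lemma adjZ a u : adj (a *: u) = conj a *: adj u.
Proof.
rewrite /adj map_mxZ -scalemxAr -scalemxAl.
by apply/matrixP => i j; rewrite !mxE.
Qed.

Lemma adj_herm u : b_hermitian b u -> adj u = u.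
Proof. by move=> hu; apply: mx_rinj => y; apply: b_inj => x; rewrite -adjP hu. Qed.

Lemma herm_adj u : adj u = u -> b_hermitian b u.
Proof. by move=> e x y; rewrite adjP e. Qed.

Definition perp m (X : 'M[F]_(m, n)) : 'M[F]_n := kermx ((map_mx conj X *m Gm)^T).

Lemma perpP m (X : 'M[F]_(m, n)) y :
  (y <= perp X)%MS <-> (forall x, (x <= X)%MS -> b x y = 0).
Proof.
have e : y *m (map_mx conj X *m Gm)^T = (map_mx conj X *m Gm *m y^T)^T.
  by rewrite (trmx_mul _ y^T) trmxK.
rewrite /perp sub_kermx e trmx_eq0; split.
  move=> /eqP H x /submxP[D ->]; rewrite bM map_mxM -!mulmxA.
  by rewrite [map_mx conj X *m _]mulmxA H mulmx0 mxE.
move=> H; apply/eqP/matrixP => i j; rewrite ord1 [RHS]mxE.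
have : (row i (map_mx conj X *m Gm *m y^T)) 0 0 = 0.
  by rewrite !row_mul -map_row -bM H ?row_sub.
by rewrite mxE.
Qed.

Lemma rank_perp m (X : 'M[F]_(m, n)) : \rank (perp X) = (n - \rank X)%N.
Proof.
rewrite mxrank_ker mxrank_tr mxrankMfree ?mxrank_map //.
by rewrite row_free_unit Gm_unit.
Qed.

Lemma perp_sym m (X : 'M[F]_(m, n)) x y :
  (y <= perp X)%MS -> (x <= X)%MS -> b y x = 0.
Proof. by move=> /perpP H xX; rewrite b_herm H // rmorph0. Qed.

Lemma perpK (X : 'M[F]_n) : (perp (perp X) :=: X)%MS.
Proof.
apply/eqmx_sym/eqmxP; rewrite -(eq_leqif (mxrank_leqif_eq _)).
  by rewrite !rank_perp subKn ?rank_leq_col.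
by apply/rV_subP => x xX; apply/perpP => y yp; exact: perp_sym yp xX.
Qed.

Lemma perpS m1 m2 (X : 'M[F]_(m1, n)) (Y : 'M[F]_(m2, n)) :
  (X <= Y)%MS -> (perp Y <= perp X)%MS.
Proof.
move=> sXY; apply/rV_subP => y /perpP H; apply/perpP => x xX.
by apply: H; rewrite (submx_trans xX).
Qed.

Lemma decomp m1 m2 (A : 'M[F]_(m1, n)) (B : 'M[F]_(m2, n)) (z : 'rV[F]_n) :
  (z <= A + B)%MS -> exists a c : 'rV[F]_n, [/\ (a <= A)%MS, (c <= B)%MS & z = a + c].
Proof. by case/sub_addsmxP => [[u1 u2] ->]; exists (u1 *m A), (u2 *m B); rewrite !submxMl. Qed.

Lemma mulsub m1 m2 (X : 'M[F]_(m1, n)) (Y : 'M[F]_(m2, n)) (u : 'M[F]_n) :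
  (forall w : 'rV[F]_n, (w <= X)%MS -> (w *m u <= Y)%MS) -> (X *m u <= Y)%MS.
Proof. by move=> H; apply/row_subP => i; rewrite row_mul H ?row_sub. Qed.

Lemma mulpow (y : 'rV[F]_n) (u : 'M[F]_n) a c :
  y *m u ^+ (a + c) = y *m u ^+ a *m u ^+ c.
Proof. by rewrite exprD -mulmxE mulmxA. Qed.

Lemma nil_step (A B u : 'M[F]_n) K :
  (A <= B)%MS -> \rank B = (\rank A).+1 -> (A *m u <= A)%MS ->
  (B *m u <= B)%MS -> u ^+ K = 0 -> (B *m u <= A)%MS.
Proof.
move=> sAB rB Au Bu uK.
have nBA : ~~ (B <= A)%MS by apply/negP => /mxrankS; rewrite rB ltnn.
case/row_subPn: nBA => j nvA; set v := row j B in nvA.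
have vB : (v <= B)%MS by exact: row_sub.
have eB : ((A + v)%MS == B)%MS.
  have sub : (A + v <= B)%MS by rewrite addsmx_sub sAB vB.
  rewrite -(eq_leqif (mxrank_leqif_eq sub)) eqn_leq (mxrankS sub) /= rB.
  have : (A < A + v)%MS.
    rewrite ltmxE addsmxSl /=; apply: contra nvA; apply: submx_trans.
    exact: addsmxSr.
  by rewrite ltmxErank => /andP[_].
have [a [c [aA cv e]]] : exists a c : 'rV[F]_n, [/\ (a <= A)%MS, (c <= v)%MS & v *m u = a + c].
  by apply: decomp; rewrite (eqmxP eB) (submx_trans _ Bu) // submxMr.
case/sub_rVP: cv => lam clam; rewrite {}clam in e.
have pw : forall k, exists ak : 'rV[F]_n, (ak <= A)%MS /\ v *m u ^+ k = ak + lam ^+ k *: v.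
  elim => [|k [ak [akA ek]]].
    by exists 0; rewrite sub0mx expr0 mulmx1 scale1r add0r.
  exists (ak *m u + lam ^+ k *: a); split.
    by rewrite addmx_sub ?scalemx_sub // (submx_trans _ Au) // submxMr.
  rewrite exprSr -mulmxE mulmxA ek mulmxDl -scalemxAl e scalerDr addrA.
  by rewrite scalerA -exprSr.
have lam0 : lam = 0.
  have [aK [aKA eK]] := pw K.+1.
  move: eK; rewrite exprSr uK mul0r mulmx0 => /esym /eqP; rewrite addr_eq0 => /eqP eK.
  apply/eqP; have := expf_eq0 lam K.+1; rewrite /= => <-; apply: contraR nvA => nz.
  have e2 : lam ^+ K.+1 *: v = - aK by rewrite eK opprK.
  by rewrite -[v](scalerK nz) e2 scalemx_sub // eqmx_opp.
move: e; rewrite lam0 scale0r addr0 => e.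
apply: mulsub => w; rewrite -(eqmxP eB) => /decomp[a1 [c1 [a1A c1v ->]]].
case/sub_rVP: c1v => mu ->; rewrite mulmxDl -scalemxAl e.
by rewrite addmx_sub ?scalemx_sub // (submx_trans _ Au) // submxMr.
Qed.

Lemma herm_pow u : b_hermitian b u -> forall k x y, b (x *m u ^+ k) y = b x (y *m u ^+ k).
Proof.
move=> hu; elim => [|k IH] x y; first by rewrite expr0 !mulmx1.
by rewrite [in LHS]exprSr [in RHS]exprS -!mulmxE !mulmxA hu IH.
Qed.

Lemma stab_pow (A u : 'M[F]_n) : (A *m u <= A)%MS -> forall k, (A *m u ^+ k <= A)%MS.
Proof.
move=> Au; elim => [|k IH]; first by rewrite expr0 mulmx1.
by rewrite exprSr -mulmxE mulmxA (submx_trans _ Au) // submxMr.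
Qed.

Variable nu : nat.
Variable E : 'M[F]_n.
Hypothesis E_rank : \rank E = nu.
Hypothesis E_sing : totally_singular b E.
Hypothesis witt_max : forall X : 'M[F]_n, totally_singular b X -> (\rank X <= nu)%N.

Lemma E_perp : (E <= perp E)%MS.
Proof. by apply/rV_subP => y yE; apply/perpP => x xE; apply: E_sing. Qed.

Lemma nu_le : (nu + nu <= n)%N.
Proof.
have := mxrankS E_perp; rewrite rank_perp E_rank.
have := rank_leq_col E; rewrite E_rank; lia.
Qed.

Lemma aniso x : (x <= perp E)%MS -> b x x = 0 -> (x <= E)%MS.
Proof.
move=> xP xx.
have ts : totally_singular b (E + x)%MS.
  move=> z w /decomp[e1 [c1 [e1E /sub_rVP[a ->] ->]]] /decomp[e2 [c2 [e2E /sub_rVP[c ->] ->]]].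
  rewrite !bDl !bDr !bZl !bZr xx E_sing //.
  have /perpP H := xP; rewrite H // (perp_sym xP) //.
  by rewrite !mulr0 !addr0.
have := witt_max ts; rewrite -E_rank => rX.
have sEX : (E <= E + x)%MS by exact: addsmxSl.
have XE : (E + x <= E)%MS by rewrite -(eq_leqif (mxrank_leqif_sup sEX)) eqn_leq rX mxrankS.
by rewrite (submx_trans _ XE) // addsmxSr.
Qed.

Lemma perp_stab u : b_hermitian b u -> (E *m u <= E)%MS -> (perp E *m u <= perp E)%MS.
Proof.
move=> hu Eu; apply: mulsub => y /perpP H; apply/perpP => e eE.
by rewrite -hu H // (submx_trans _ Eu) // submxMr.
Qed.

Lemma C2 u K : b_hermitian b u -> (E *m u <= E)%MS -> u ^+ K = 0 ->
  (perp E *m u <= E)%MS.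
Proof.
move=> hu Eu uK.
have Pu := perp_stab hu Eu.
pose Q j := forall y : 'rV[F]_n, (y <= perp E)%MS -> (y *m u ^+ j <= E)%MS.
have QK : Q K.+1 by move=> y _; rewrite exprSr uK mul0r mulmx0 sub0mx.
have step : forall j, (0 < j)%N -> Q j.+1 -> Q j.
  move=> j j0 Qj y yP; apply: aniso.
    by rewrite (submx_trans _ (stab_pow Pu j)) // submxMr.
  rewrite herm_pow // -mulpow.
  have -> : (j + j = j.+1 + j.-1)%N by lia.
  rewrite mulpow (perp_sym yP) //.
  apply: (submx_trans _ (stab_pow Eu j.-1)); apply: submxMr; exact: Qj.
have : forall k, (k <= K)%N -> Q (K.+1 - k)%N.
  elim => [|k IH] kK; first by rewrite subn0.
  apply: step; first lia.
  have e : (K.+1 - k.+1).+1 = (K.+1 - k)%N by lia.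
  by rewrite e; apply: IH; lia.
move=> /(_ K (leqnn K)); rewrite subSnn => Q1.
by apply: mulsub => y yP; have := Q1 y yP; rewrite expr1.
Qed.

Variable Fl : nat -> 'M[F]_n.
Hypothesis Hflag : forall i, (i < nu)%N -> (Fl i <= Fl i.+1)%MS.
Hypothesis Hrank : forall i, (i <= nu)%N -> \rank (Fl i) = i.
Hypothesis E_def : E = Fl nu.

Definition NN := (nu + nu).+1.
Definition G j := if (j <= nu)%N then Fl j else perp (Fl (NN - j)).
Definition Scond u := forall j, (0 < j <= NN)%N -> (G j *m u <= G j.-1)%MS.

Lemma G_chain j : (j < NN)%N -> (G j <= G j.+1)%MS.
Proof.
rewrite /G /NN => jN.
have [hj|hj|hj] : [\/ (j < nu)%N, (nu < j)%N | j = nu] by case: (ltngtP j nu) => h; [apply: Or31 | apply: Or32 | apply: Or33].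
- have c1 : (j <= nu)%N = true by lia.
  have c2 : (j.+1 <= nu)%N = true by lia.
  by rewrite c1 c2 Hflag.
- have c1 : (j <= nu)%N = false by lia.
  have c2 : (j.+1 <= nu)%N = false by lia.
  rewrite c1 c2; apply: perpS.
  have -> : ((nu + nu).+1 - j = ((nu + nu).+1 - j.+1).+1)%N by lia.
  by apply: Hflag; lia.
- subst j; rewrite leqnn ltnn.
  have -> : ((nu + nu).+1 - nu.+1 = nu)%N by lia.
  by rewrite -E_def E_perp.
Qed.

Lemma Fl0 : Fl 0 = 0.
Proof. by apply/eqP; rewrite -mxrank_eq0 Hrank. Qed.

Lemma G_rank j : (j <= NN)%N -> \rank (G j) = gf nu n j.
Proof.
rewrite /G /gf /NN => jN; case: ifP => hj; first by rewrite Hrank.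
by rewrite rank_perp Hrank //; lia.
Qed.

Lemma perpG k : (k <= NN)%N -> (perp (G k) :=: G (NN - k))%MS.
Proof.
rewrite /G /NN => kN; case: ifP => hk.
  by rewrite ifF ?subKn //; lia.
rewrite ifT; last lia.
exact: perpK.
Qed.

Lemma dual_cond u j : (0 < j <= NN)%N ->
  (G (NN.+1 - j) *m u <= G (NN - j))%MS -> (G j *m adj u <= G j.-1)%MS.
Proof.
move=> /andP[j0 jN] H.
have e1 : (perp (G j.-1) :=: G (NN.+1 - j))%MS.
  have -> : (NN.+1 - j = NN - j.-1)%N by lia.
  by apply: perpG; lia.
have e2 : (perp (G j) :=: G (NN - j))%MS by apply: perpG; lia.
suff : (G j *m adj u <= perp (perp (G j.-1)))%MS by rewrite perpK.
apply: mulsub => a aG; apply/perpP => y; rewrite e1 => yG.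
rewrite -adjP; apply: (perp_sym _ aG).
by rewrite e2 (submx_trans _ H) // submxMr.
Qed.

Lemma S_adj u : Scond u -> Scond (adj u).
Proof.
move=> Su j hj; apply: dual_cond => //.
move: hj => /andP[j0 jN].
have := Su (NN.+1 - j)%N; have -> : ((NN.+1 - j).-1 = NN - j)%N by lia.
by apply; apply/andP; split; lia.
Qed.

Lemma Scond0 : Scond 0.
Proof. by move=> j _; rewrite mulmx0 sub0mx. Qed.

Lemma S_D u v : Scond u -> Scond v -> Scond (u + v).
Proof. by move=> Su Sv j hj; rewrite mulmxDr addmx_sub ?Su ?Sv. Qed.

Lemma S_Z a u : Scond u -> Scond (a *: u).
Proof. by move=> Su j hj; rewrite -scalemxAr scalemx_sub ?Su. Qed.

Lemma WH_S u : WH b nu Fl u -> Scond u.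
Proof.
case=> [[K uK] hu stab].
have au := adj_herm hu.
have low : forall j, (0 < j <= nu.+1)%N -> (G j *m u <= G j.-1)%MS.
  move=> j /andP[j0 jn]; case: (ltngtP j nu.+1) jn => // hj _.
    rewrite /G ifT ?ifT; try lia.
    have ej : j = (j.-1).+1 by lia.
    rewrite {1 2}ej; apply: (nil_step (K := K)) => //.
    - by apply: Hflag; lia.
    - by rewrite !Hrank //; lia.
    - by apply: stab; lia.
    - by apply: stab; lia.
  subst j; rewrite /G /NN ifF ?ifT; try lia.
  have -> : ((nu + nu).+1 - nu.+1 = nu)%N by lia.
  rewrite -E_def; apply: (C2 hu _ uK).
  by rewrite E_def; apply: stab.
move=> j hj; case: (leqP j nu.+1) => hjn.
  by apply: low; move: hj => /andP[j0 jN]; apply/andP; split; lia.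
rewrite -{1}au; apply: dual_cond => //.
move: hj => /andP[j0 jN].
have := low (NN.+1 - j)%N.
have -> : ((NN.+1 - j).-1 = NN - j)%N by lia.
by apply; apply/andP; split; rewrite /NN in jN *; lia.
Qed.

Lemma S_WH u : Scond u -> adj u = u -> WH b nu Fl u.
Proof.
move=> Su au; split; last first.
- move=> i hi; case: i hi => [|i] hi; first by rewrite Fl0 mul0mx sub0mx.
  have hH : (0 < i.+1 <= NN)%N by apply/andP; split; rewrite /NN; lia.
  have := Su i.+1 hH; rewrite /G /=.
  have c1 : (i.+1 <= nu)%N = true by [].
  have c2 : (i <= nu)%N = true by lia.
  rewrite c1 c2 => H; rewrite (submx_trans H) // Hflag //.
- exact: herm_adj.
exists NN.
have H : forall k, (k <= NN)%N -> (G NN *m u ^+ k <= G (NN - k))%MS.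
  elim => [|k IH] kN; first by rewrite expr0 mulmx1 subn0.
  rewrite exprSr -mulmxE mulmxA (submx_trans (submxMr u (IH (ltnW kN)))) //.
  have := Su (NN - k)%N; have -> : ((NN - k).-1 = NN - k.+1)%N by lia.
  by apply; apply/andP; split; lia.
have := H NN (leqnn _); rewrite subnn /G /= Fl0 submx0 => /eqP e0.
have full : row_full (G NN).
  by rewrite /row_full G_rank // /gf /NN ifF; lia.
apply/eqP; rewrite -submx0 -e0 -{1}[u ^+ NN]mul1mx submxMr //.
by apply: submx_full.
Qed.

Lemma S_coord (P : 'M[F]_n) (Pu : P \in unitmx)
  (eP : forall j, (j <= NN)%N -> ((pid_mx (\rank (G j)) : 'M[F]_n) *m P == G j)%MS) u :
  Scond u <-> (forall r c : 'I_n, ~~ (c < levf nu n r)%N -> (P *m u *m invmx P) r c = 0).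
Proof.
have condE : forall j, (0 < j <= NN)%N -> (G j *m u <= G j.-1)%MS <->
    (forall r c : 'I_n, (r < gf nu n j)%N -> (gf nu n j.-1 <= c)%N ->
       (P *m u *m invmx P) r c = 0).
  move=> j /andP[j0 jN].
  have jN' : (j.-1 <= NN)%N by lia.
  rewrite (eqmx_sym (eqmxMr u (eqmxP (eP j jN)))) (eqmx_sym (eqmxP (eP j.-1 jN'))).
  by rewrite -(G_rank jN) -(G_rank jN'); apply: coordP.
have hN := nu_le.
split => [Su r c /negP nal|H j hj].
  have lc : (levf nu n r <= c)%N by rewrite leqNgt; apply/negP.
  have [j [hj rj cj]] := arith1 hN (ltn_ord r) lc.
  by have /(condE j hj) := Su j hj; apply.
apply/(condE j hj) => r c rj cj; apply: H; rewrite -leqNgt.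
by apply: (arith2 hN _ rj cj); move: hj; rewrite /NN.
Qed.

Lemma count_A : #|Aset (fun r c : 'I_n => (c < levf nu n r)%N)| = (nu * (2 * n - 2 * nu - 1))%N.
Proof.
have hN := nu_le.
rewrite -sum1_card big_mkcond /=.
rewrite -(pair_bigA _ (fun r c : 'I_n => if (r, c) \in Aset (fun r c : 'I_n => (c < levf nu n r)%N) then 1%N else 0%N)) /=.
rewrite -(sum_lev hN); apply: eq_bigr => r _.
have -> : (\sum_(c < n) (if (r, c) \in Aset (fun r c : 'I_n => (c < levf nu n r)%N) then 1%N else 0%N) = \sum_(c < n) (c < levf nu n r : nat))%N.
  by apply: eq_bigr => c _; rewrite unfold_in /=; case: ifP.
rewrite cnt; apply/minn_idPl.
have := ltn_ord r; rewrite /levf; case: ifP => _; try case: ifP => _; lia.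
Qed.

Hypothesis conj_nonid : exists x : F, conj x != x.

Lemma main_sec : K_subspace conj (WH b nu Fl) /\
  K_dim conj (WH b nu Fl) (nu * (2 * n - 2 * nu - 1))%N.
Proof.
have WHE : forall u, WH b nu Fl u <-> (Scond u /\ adj u = u).
  move=> u; split => [wu|[Su au]]; last exact: S_WH.
  by split; [exact: WH_S | case: wu => _ hu _; exact: adj_herm].
split.
  split.
  - by apply/WHE; split; [exact: Scond0 | rewrite /adj map_mx0 mulmx0 mul0mx trmx0].
  - move=> u v /WHE[Su au] /WHE[Sv av]; apply/WHE; split; first exact: S_D.
    by rewrite adjD au av.
  - move=> k u kK /WHE[Su au]; apply/WHE; split; first exact: S_Z.
    by rewrite adjZ kK au.
have [P eP] := chain_basis G_chain.
have Pu : P \in unitmx.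
  have := eP NN (leqnn _); rewrite G_rank // /gf /NN ifF; last lia.
  have -> : (n - ((nu + nu).+1 - (nu + nu).+1))%N = n by rewrite subnn subn0.
  rewrite pid_mx_1 mul1mx -row_full_unit => /eqmxP e.
  rewrite /row_full e -/NN G_rank // /gf /NN ifF; last lia.
  by rewrite subnn subn0.
case: conj_nonid => theta th.
rewrite -count_A.
have K := descent_dim th adjD adjZ adjK
  (fun u => iff_trans (S_coord Pu eP u) (Bas_span (fun r c : 'I_n => (c < levf nu n r)%N) Pu u))
  (Bas_free Pu) S_adj.
case: K => B [B1 B2 B3]; exists B; split => //.
- by move=> i; apply/WHE; exact: B1.
- by move=> u /WHE; exact: B3.
Qed.

End Form.

Theorem mainTheorem18 (F : fieldType) (conj : {rmorphism F -> F})
    (conj_invol : involutive conj) (conj_nonid : exists x : F, conj x != x)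
    (n : nat) (b : 'rV[F]_n -> 'rV[F]_n -> F)
    (b_sesq : sesq_form conj b) (b_herm : herm_form conj b)
    (b_nondeg : sesq_nondegenerate b)
    (nu : nat) (b_witt : witt_index b nu)
    (p : nat) (Fl : nat -> 'M[F]_n)
    (Fl_max : maximal_pc_singular_flag b nu p Fl) :
  K_subspace conj (WH b p Fl) /\
  K_dim conj (WH b p Fl) (nu * (2 * n - 2 * nu - 1))%N.
Proof.
case: Fl_max => Hfl Hpc Hs Hp; subst p.
case: b_witt => _ Hw.
exact: (main_sec conj_invol b_sesq b_herm b_nondeg (Hpc nu (leqnn nu)) Hs Hw
  Hfl Hpc erefl conj_nonid).
Qed.
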